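(* Let $N\ge2$, $\alpha\in(0,\infty)^{N+1}$ and $\tilde\alpha=\sum_{n=1}^N\alpha_n$. For every $d\in\mathbb Z_+$, $$\tilde\Lambda_{d+1}=(2d+\tilde\alpha+\tilde\Lambda_d)\cup\{0[C(N,d+1)-C(N,d)]\}$$ as multisets, where $C(N,d)=\binom{d+N-1}{d}$.
   Context: $\mathscr H_d$ is the space of homogeneous polynomials of total degree $d$ in $x_1,\dots,x_N$ (so $\dim\mathscr H_d=C(N,d)$). Let $\tilde L=\sum_{n=1}^N(x_n\partial_n^2+\alpha_n\partial_n)$, which maps $\mathscr H_d$ into $\mathscr H_{d-1}$, and $|x|_1=\sum_{n=1}^Nx_n$. $\tilde\Lambda_d$ is the spectrum, as a multiset (eigenvalues with multiplicities), of the operator $\psi\mapsto|x|_1\tilde L\psi$ on $\mathscr H_d$. For a multiset $S$ and $c\in\mathbb R$, $c+S$ denotes the multiset $\{c+s:s\in S\}$; $\{0[l]\}$ denotes $0$ repeated $l$ times; $\cup$ is multiset union. *)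

(* Defs.v *)
From HB Require Import structures.
From mathcomp Require Import all_boot all_order all_algebra.
From mathcomp Require Import mpoly complex.
Set Implicit Arguments. Unset Strict Implicit. Unset Printing Implicit Defensive.
Import Order.TTheory GRing.Theory Num.Theory.
Local Open Scope ring_scope.

Definition mset (T : Type) := T -> nat.
(* c + S = {c + s : s in S} : multiplicity of z is that of z - c in S *)
Definition mshift (R : zmodType) (c : R) (S : mset R) : mset R := fun z => S (z - c).
Definition munion (T : Type) (S1 S2 : mset T) : mset T := fun z => (S1 z + S2 z)%N.
(* {a[l]} : a repeated l times *)
Definition mrep (T : eqType) (a : T) (l : nat) : mset T := fun z => if z == a then l else 0%N.

Section Op.
Variables (R : rcfType) (N : nat) (alpha : 'I_N.+1 -> R).

Definition norm1 : {mpoly R[N]} := \sum_(i < N) 'X_i.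

(* L~ = sum_n (x_n d_n^2 + alpha_n d_n)  (alpha_n for n = 1..N; index shifted to 0..N-1) *)
Definition Ltilde (p : {mpoly R[N]}) : {mpoly R[N]} :=
  \sum_(i < N) ('X_i * mderiv i (mderiv i p) + alpha (widen_ord (leqnSn N) i) *: mderiv i p).

Definition opT (p : {mpoly R[N]}) : {mpoly R[N]} := norm1 * Ltilde p.

Definition hmon (d : nat) := {m : 'X_{1..N < d.+1} | mdeg m == d}.

(* Matrix of opT restricted to H_d in the monomial basis (column j = image of
   the j-th basis monomial, row i = coefficient on the i-th basis monomial). *)
Definition opmx (d : nat) : 'M[R]_(#|{: hmon d}|) :=
  \matrix_(i, j) (opT 'X_[val (val (enum_val j))]) @_ (val (val (enum_val i))).

(* Spectrum (eigenvalues with algebraic multiplicities, over C = R[i]) of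
   psi |-> |x|_1 L~ psi on H_d : the root multiplicities of its characteristic
   polynomial. *)
Definition Lambda (d : nat) : mset R[i] :=
  fun z => mup z (map_poly (real_complex R) (char_poly (opmx d))).
End Op.

Definition Cdim (N d : nat) : nat := 'C(d + N - 1, d).

(* Main.v *)
Require Import Defs.
From HB Require Import structures.
From mathcomp Require Import all_boot all_order all_algebra.
From mathcomp Require Import mpoly complex ring.
Set Implicit Arguments. Unset Strict Implicit. Unset Printing Implicit Defensive.
Import Order.TTheory GRing.Theory Num.Theory.
Local Open Scope ring_scope.


Section Sylv.
Variable R : idomainType.

Lemma char_poly_sylv (p q : nat) (A : 'M[R]_(p,q)) (B : 'M[R]_(q,p)) :
  (q <= p)%N -> char_poly (A *m B) = 'X^(p - q) * char_poly (B *m A).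
Proof.
move=> hqp.
rewrite /char_poly /char_poly_mx !map_mxM.
set A' := map_mx polyC A; set B' := map_mx polyC B.
set x : {poly R} := 'X.
pose M1 := block_mx (x%:M : 'M_p) A' B' (1%:M : 'M_q).
have e1 : block_mx (1%:M : 'M_p) (- A') 0 (x%:M : 'M_q) *m M1 =
          block_mx (x%:M - A' *m B') 0 (x *: B') (x%:M).
  rewrite mulmx_block !mul1mx !mul0mx !add0r mulNmx mulmx1.
  rewrite mul_scalar_mx mulmx1; congr block_mx.
  by apply/matrixP=> i j; rewrite !mxE subrr.
have e2 : block_mx (1%:M : 'M_p) 0 (- B') (x%:M : 'M_q) *m M1 =
          block_mx (x%:M) A' 0 (x%:M - B' *m A').
  rewrite mulmx_block !mul1mx !mul0mx !addr0 mulNmx mulmx1.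
  rewrite mul_mx_scalar mul_scalar_mx; congr block_mx.
  by apply/matrixP=> i j; rewrite !mxE addNr.
  by rewrite mulNmx addrC.
have d1 := congr1 determinant e1; have d2 := congr1 determinant e2.
rewrite det_mulmx det_ublock det_lblock !det_scalar !expr1n !mul1r in d1.
rewrite det_mulmx det_lblock det_ublock !det_scalar !expr1n !mul1r in d2.
have xn0 : x ^+ q != 0 by rewrite expf_neq0 // polyX_eq0.
have h1 : \det M1 = \det (x%:M - A' *m B').
  by apply: (mulfI xn0); rewrite d1 mulrC.
have : x ^+ q * \det (x%:M - A' *m B') = x ^+ q * (x ^+ (p - q) * \det (x%:M - B' *m A')).
  by rewrite -h1 d2 mulrA -exprD subnKC.
by move/(mulfI xn0).
Qed.
End Sylv.
Lemma char_poly_shift (R : comNzRingType) n (A : 'M[R]_n) c :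
  char_poly (A + c%:M) = char_poly A \Po ('X - c%:P).
Proof.
rewrite /char_poly -det_map_mx; congr (\det _).
apply/matrixP => i j; rewrite /char_poly_mx !mxE.
rewrite rmorphB /= rmorphMn /= comp_polyX comp_polyC.
case: (i == j) => /=; rewrite ?mulr1n ?mulr0n ?addr0 //.
by rewrite polyCD; ring.
Qed.

Section Mup.
Variable F : fieldType.

Lemma comp_shiftX (a b : F) n :
  ('X - a%:P) ^+ n \Po ('X + b%:P) = ('X - (a - b)%:P) ^+ n.
Proof.
rewrite rmorphXn /= rmorphB /= comp_polyX comp_polyC; congr (_ ^+ _).
by rewrite polyCB; ring.
Qed.

Lemma mup_shift (Q : {poly F}) (z c : F) : Q != 0 ->
  mup z (Q \Po ('X - c%:P)) = mup (z - c) Q.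
Proof.
move=> Qn0.
have e : 'X - c%:P = 'X + (- c)%:P by rewrite polyCN.
rewrite e; set Q' := Q \Po _.
have QK : Q' \Po ('X + c%:P) = Q.
  have e2 : 'X - (- c)%:P = 'X + c%:P :> {poly F} by rewrite polyCN opprK.
  by rewrite -e2 comp_polyXaddC_K.
have Q'n0 : Q' != 0.
  apply/negP => /eqP h; move/eqP: Qn0; apply; by rewrite -QK h comp_poly0.
apply/eqP; rewrite eqn_leq; apply/andP; split.
  rewrite mup_geq //; have := leqnn (mup z Q'); rewrite mup_geq //.
  by move/(dvdp_comp_poly ('X + c%:P)); rewrite QK comp_shiftX.
rewrite mup_geq //; have := leqnn (mup (z - c) Q); rewrite mup_geq //.
move/(dvdp_comp_poly ('X + (- c)%:P)); rewrite comp_shiftX.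
by rewrite opprK subrK.
Qed.
End Mup.
Section MP.
Variables (R : rcfType) (N : nat) (alpha : 'I_N.+1 -> R).
Local Notation P := {mpoly R[N]}.

Definition nb d := #|{: hmon N d}|.
Definition mon d (i : 'I_(nb d)) : 'X_{1..N} := val (val (enum_val i)).

Lemma mdeg_mon d (i : 'I_(nb d)) : mdeg (mon i) = d.
Proof. exact/eqP/(valP (enum_val i)). Qed.

Lemma mon_inj d : injective (@mon d).
Proof. by move=> i j /val_inj/val_inj/enum_val_inj. Qed.

Lemma mon_surj d m : mdeg m = d -> exists i : 'I_(nb d), mon i = m.
Proof.
move=> hm; have hb : (mdeg m < d.+1)%N by rewrite hm.
pose bm : 'X_{1..N < d.+1} := BMultinom hb.
have hh : mdeg bm == d by rewrite /= hm.
pose h : hmon N d := exist _ bm hh.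
by exists (enum_rank h); rewrite /mon enum_rankK.
Qed.

Lemma expand d (p : P) : p \is d.-homog ->
  p = \sum_(k < nb d) p@_(mon k) *: 'X_[mon k].
Proof.
move=> hp; apply/mpolyP => m; rewrite raddf_sum /=.
under eq_bigr do rewrite mcoeffZ mcoeffX.
have [hm|hm] := eqVneq (mdeg m) d.
  have [i hi] := mon_surj hm.
  rewrite (bigD1 i) //= big1 ?addr0; first by rewrite hi eqxx mulr1.
  move=> j hj; case: eqP => [e|]; last by rewrite mulr0.
  by move: hj; rewrite -hi in e; rewrite (mon_inj e) eqxx.
rewrite (dhomog_nemf_coeff hp hm) big1 // => j _.
case: eqP => [e|]; last by rewrite mulr0.
by move: hm; rewrite -e mdeg_mon eqxx.
Qed.

Definition matf (f : P -> P) d e : 'M[R]_(nb e, nb d) :=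
  \matrix_(i, j) (f 'X_[mon j]) @_ (mon i).

Lemma matf_comp (f g : P -> P) d e e' :
  (forall j : 'I_(nb d), f 'X_[mon j] \is e.-homog) ->
  {morph g : x y / x + y} -> (forall c p, g (c *: p) = c *: g p) ->
  matf (fun p => g (f p)) d e' = matf g e e' *m matf f d e.
Proof.
move=> hf gD gZ; have g0 : g 0 = 0.
  have := gD 0 0; rewrite addr0 => /(congr1 (fun x => x - g 0)).
  by rewrite subrr addrK => <-.
apply/matrixP => i j; rewrite !mxE (expand (hf j)).
rewrite (big_morph g gD g0) raddf_sum /=; apply: eq_bigr => k _.
by rewrite gZ mcoeffZ !mxE mulrC.
Qed.

Local Notation Lt := (Ltilde alpha).

Lemma LtD : {morph Lt : x y / x + y}.
Proof.
move=> p q; rewrite /Ltilde -big_split /=; apply: eq_bigr => i _.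
by rewrite !mderivD mulrDr scalerDr addrACA.
Qed.

Lemma LtZ c p : Lt (c *: p) = c *: Lt p.
Proof.
rewrite /Ltilde scaler_sumr; apply: eq_bigr => i _.
rewrite !mderivZ scalerDr scalerAr; congr (_ + _).
by rewrite !scalerA mulrC.
Qed.

Lemma MD : {morph (fun p : P => norm1 R N * p) : x y / x + y}.
Proof. by move=> p q /=; rewrite mulrDr. Qed.

Lemma MZ c (p : P) : norm1 R N * (c *: p) = c *: (norm1 R N * p).
Proof. by rewrite scalerAr. Qed.

Lemma deriv_supp e (p : P) i : p \is e.-homog ->
  forall m, m \in msupp (mderiv i p) -> (mdeg m).+1 = e.
Proof.
move=> hp m; rewrite mcoeff_msupp mcoeff_deriv => h.
have h' : p@_(m + U_(i))%MM != 0.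
  by apply: contraNneq h => ->; rewrite mul0rn.
have := dhomog_mf hp; rewrite /= => /(_ (m + U_(i))%MM).
by rewrite mcoeff_msupp h' mdegD mdeg1 addn1 => ->.
Qed.

Lemma deriv_homog e (p : P) i : p \is e.-homog -> mderiv i p \is e.-1.-homog.
Proof.
move=> hp; apply/dhomogP => m hm; by rewrite -(deriv_supp hp hm).
Qed.

Lemma deriv_homog0 (p : P) i : p \is 0.-homog -> mderiv i p = 0.
Proof.
move=> hp; apply: msuppnil0.
have := deriv_supp hp (i := i); case: (msupp _) => // m s /(_ m).
by rewrite mem_head => /(_ isT).
Qed.

Lemma Xi_homog i : ('X_i : P) \is 1.-homog.
Proof. by rewrite dhomogX; apply/eqP; apply: mdeg1. Qed.

Lemma norm1_homog : norm1 R N \is 1.-homog.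
Proof. by apply: rpred_sum => i _; exact: Xi_homog. Qed.

Lemma Lt_homog d (p : P) : p \is d.+1.-homog -> Lt p \is d.-homog.
Proof.
move=> hp; apply: rpred_sum => i _; apply: rpredD; last first.
  by apply: rpredZ; exact: (deriv_homog i hp).
have h1 := deriv_homog i hp; case: d hp h1 => [|d] hp h1.
  by rewrite (deriv_homog0 i h1) mulr0 rpred0.
by have := dhomogM (Xi_homog i) (deriv_homog i h1).
Qed.

Lemma M_homog d (p : P) : p \is d.-homog -> norm1 R N * p \is d.+1.-homog.
Proof. by move=> hp; have := dhomogM norm1_homog hp; rewrite add1n. Qed.

Lemma deriv_norm1 i : mderiv i (norm1 R N) = 1.
Proof.
rewrite /norm1 raddf_sum (bigD1 i) //= big1 ?addr0.
  have e : (U_(i) - U_(i) = 0)%MM by apply/mnmP=> j; rewrite mnmBE mnm0E subnn.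
  by rewrite mderivX e mpolyX0 mnm1E eqxx scale1r.
by move=> j hj; rewrite mderivX mnm1E (negbTE hj) scale0r.
Qed.

Definition atil := \sum_(n < N) alpha (widen_ord (leqnSn N) n).

Lemma Lt_comm (p : P) : Lt (norm1 R N * p) =
  norm1 R N * Lt p + 2%:R * (\sum_i 'X_i * mderiv i p) + atil%:MP * p.
Proof.
rewrite /Ltilde /atil raddf_sum /=.
rewrite [X in _ = _ + X]mulr_suml [norm1 R N * (\sum_i _)]mulr_sumr [2%:R * _]mulr_sumr -!big_split /=.
apply: eq_bigr => i _.
rewrite mderivM deriv_norm1 mul1r mderivD mderivM deriv_norm1 mul1r.
rewrite -!mul_mpolyC; ring.
Qed.

Lemma euler (m : 'X_{1..N}) :
  \sum_i ('X_i : P) * mderiv i 'X_[m] = (mdeg m)%:R *: 'X_[m].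
Proof.
rewrite mdegE natr_sum scaler_suml; apply: eq_bigr => i _.
rewrite mderivX -scalerAr.
have [->|hm] := eqVneq (m i) 0%N; first by rewrite !scale0r.
congr (_ *: _).
rewrite -mpolyXD addmC submK //; apply/mnm_lepP => j; rewrite mnm1E.
by case: eqP => [<-|]; rewrite ?lt0n.
Qed.

Lemma opmx_succ d : opmx alpha d.+1 =
  matf (fun p => norm1 R N * p) d d.+1 *m matf Lt d.+1 d.
Proof.
have -> : opmx alpha d.+1 = matf (fun p => norm1 R N * Lt p) d.+1 d.+1 by [].
apply: matf_comp => [j||]; last exact: MZ; last exact: MD.
by apply: Lt_homog; rewrite dhomogX; apply/eqP; exact: mdeg_mon.
Qed.

Lemma opmx_comm d : matf Lt d.+1 d *m matf (fun p => norm1 R N * p) d d.+1 =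
  opmx alpha d + (2 * d%:R + atil)%:M.
Proof.
rewrite -matf_comp; last exact: LtZ; last exact: LtD; last first.
  by move=> j; apply: M_homog; rewrite dhomogX; apply/eqP; exact: mdeg_mon.
apply/matrixP => i j; rewrite !mxE Lt_comm euler mdeg_mon /opT.
rewrite -[2%:R](mpolyC_nat) !mul_mpolyC !mcoeffD !mcoeffZ mcoeffX.
rewrite (inj_eq (@mon_inj d)) eq_sym; case: (i == j); rewrite ?mulr1 ?mulr0 ?addr0 //.
by rewrite mulr1n addrA.
Qed.
End MP.

Lemma nb_card n d : nb n.+1 d = 'C(d + n, d).
Proof.
have u1 : uniq (map (@mon n.+1 d) (enum 'I_(nb n.+1 d))).
  by rewrite map_inj_uniq ?enum_uniq //; exact: mon_inj.
have pe : perm_eq (map (@mon n.+1 d) (enum 'I_(nb n.+1 d)))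
   [seq s2m t | t : d.-tuple 'I_n.+1 <- enum (basis n.+1 d)].
  apply: uniq_perm => //; first exact: uniq_basis.
  move=> m; rewrite -basis_cover; apply/mapP/eqP => [[i _ ->]|hm].
    exact: mdeg_mon.
  by have [i hi] := mon_surj hm; exists i; rewrite ?mem_enum.
by rewrite -(size_basis n d) -(perm_size pe) size_map size_enum_ord.
Qed.

Lemma Cdim_nb n d : Cdim n.+1 d = nb n.+1 d.
Proof. by rewrite nb_card /Cdim addnS subn1. Qed.

Unset Implicit Arguments.
Theorem proposition4p1 (R : rcfType) (N : nat) (alpha : 'I_N.+1 -> R) :
  (2 <= N)%N ->
  (forall n, 0 < alpha n) ->
  forall d : nat,
    let atilde := \sum_(n < N) alpha (widen_ord (leqnSn N) n) in
    Lambda alpha d.+1 =1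
      munion (mshift ((2 * d%:R + atilde)%:C)%C (Lambda alpha d))
             (mrep 0 (Cdim N d.+1 - Cdim N d)%N).
Proof.
case: N alpha => [//|n] alpha _ _ d atilde z.
rewrite /Lambda /munion /mshift /mrep.
have hle : (nb n.+1 d <= nb n.+1 d.+1)%N.
  by rewrite !nb_card addSn binS leq_addl.
rewrite opmx_succ char_poly_sylv // opmx_comm char_poly_shift.
set c := 2 * d%:R + atil alpha.
have -> : ((2 * d%:R + atilde)%:C)%C = real_complex R c by [].
set chi := char_poly (opmx alpha d).
have chin0 : chi != 0 by apply: monic_neq0; apply: char_poly_monic.
have mchin0 : map_poly (real_complex R) chi != 0 by rewrite map_poly_eq0.
rewrite rmorphM /= mupM; last first.
- by rewrite map_poly_eq0 comp_poly2_eq0 ?size_XsubC.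
- by rewrite map_poly_eq0 monic_neq0 ?monicXn.
rewrite rmorphXn /= map_polyX map_comp_poly rmorphB /= map_polyX map_polyC /=.
rewrite mup_shift //.
have := mup_XsubCX (nb n.+1 d.+1 - nb n.+1 d) z 0; rewrite polyC0 subr0 => ->.
by rewrite !Cdim_nb addnC eq_sym.
Qed.
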